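(* Fix $\Delta>0$. In the $\mathrm{EDD}(\lambda)$ model with a global clock, the probability that a run of the protocol $\mathrm{CORE}(\Delta)$ is correct is at least $(1-e^{-\lambda\Delta})^n$.
   Context: Agents $i_0,i_1,\ldots,i_n$ share an accurate global clock and are connected by a complete reliable network; the delay of each message is an independent exponential random variable with parameter $\lambda$. At time $0$ the supervisor $i_0$ receives an external input. Protocol $\mathrm{CORE}(\Delta)$: at time $0$, $i_0$ sends a ''trigger'' message to each of $i_1,\ldots,i_n$; upon receiving the trigger, agent $i_k$ waits until the global time is at least $\Delta$ and then performs its action $\alpha_k$ (acting immediately if the trigger arrives after time $\Delta$). Letting $t_k$ be the time at which $i_k$ performs $\alpha_k$, a run is correct if $t_1\le t_2\le\cdots\le t_n<\infty$. *)

(* Defs.v *)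
From HB Require Import structures.
From mathcomp Require Import all_boot all_order all_algebra.
From mathcomp Require Import all_classical all_reals all_analysis.
Set Implicit Arguments. Unset Strict Implicit. Unset Printing Implicit Defensive.
Import Order.TTheory GRing.Theory Num.Theory.
Local Open Scope classical_set_scope.
Local Open Scope ring_scope.

(* Mutual independence of a finite family of real random variables:
   the product rule for every choice of Borel sets (taking B i = setT
   recovers every finite subfamily). *)
Definition mutually_independent d (T : measurableType d) (R : realType)
  (P : probability T R) (n : nat) (X : 'I_n -> T -> R) : Prop :=
  forall B : 'I_n -> set R, (forall i, measurable (B i)) ->
    P (\bigcap_(i in [set: 'I_n]) (X i @^-1` B i)) =
    (\prod_(i < n) P (X i @^-1` B i))%E.

(* Protocol CORE(Delta): agent i_k receives the trigger at time
   [delay] (sent at time 0) and acts at time max(Delta, delay). *)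
Definition core_action_time (R : realType) (Delta delay : R) : R :=
  Num.max Delta delay.

(* A run with action times t_1,...,t_n is correct iff t_1 <= ... <= t_n
   (finiteness is automatic: times are real numbers). *)
Definition run_correct (R : realType) (n : nat) (t : 'I_n -> R) : Prop :=
  forall i j : 'I_n, (i <= j)%N -> t i <= t j.

Definition core_correct_event d (T : measurableType d) (R : realType)
  (n : nat) (Delta : R) (D : 'I_n -> T -> R) : set T :=
  [set w | run_correct (fun k => core_action_time Delta (D k w))].

(* Main.v *)
Require Import Defs.
From HB Require Import structures.
From mathcomp Require Import all_boot all_order all_algebra.
From mathcomp Require Import all_classical all_reals all_analysis.
From mathcomp Require Import measurable_realfun.
Import Order.TTheory GRing.Theory Num.Theory.
Local Open Scope classical_set_scope.
Local Open Scope ring_scope.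

Theorem corollary1 (R : realType) (d : measure_display) (T : measurableType d)
  (P : probability T R) (n : nat) (lambda Delta : R)
  (lambda_gt0 : 0 < lambda) (Delta_gt0 : 0 < Delta)
  (D : 'I_n -> {RV P >-> R})
  (D_indep : mutually_independent P (fun k => (D k : T -> R)))
  (D_exp : forall (k : 'I_n) (A : set R), measurable A ->
     distribution P (D k) A = exponential_prob lambda A) :
  (((1 - expR (- (lambda * Delta))) ^+ n)%:E <=
     P (core_correct_event Delta (fun k => (D k : T -> R))))%E.
Proof.
set S := \bigcap_(i in [set: 'I_n]) ((D i : T -> R) @^-1` `[0, Delta]).
have PS : P S = ((1 - expR (- (lambda * Delta))) ^+ n)%:E.
  rewrite /S D_indep; last by move=> i; exact: measurable_itv.
  under eq_bigr => i _.
    have := D_exp i `[0, Delta]%classic (measurable_itv _).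
    rewrite /distribution /pushforward => ->.
    rewrite exponential_prob_itv0c // mulNr.
    over.
  by rewrite /= -EFinB prodEFin prodr_const card_ord.
have mS : measurable S.
  apply: fin_bigcap_measurable; first exact: finite_finset.
  move=> i _.
  rewrite -[X in measurable X]setTI.
  by apply: (measurable_funP (D i)) => //; exact: measurable_itv.
have mE : measurable (core_correct_event Delta (fun k => (D k : T -> R))).
  have -> : core_correct_event Delta (fun k => (D k : T -> R)) =
    \bigcap_(i in [set: 'I_n]) \bigcap_(j in [set j : 'I_n | (i <= j)%N])
      [set w | core_action_time Delta (D i w) <= core_action_time Delta (D j w)].
    apply/seteqP; split=> w /=.
      by move=> H i _ j /= ij; exact: H.
    by move=> H i j ij; exact: (H i I j ij).
  apply: fin_bigcap_measurable; first exact: finite_finset.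
  move=> i _.
  apply: fin_bigcap_measurable; first exact: finite_finset.
  move=> j _.
  rewrite -[X in measurable X]setTI.
  apply: measurable_fun_le => //.
    by apply: measurable_maxr => //; exact: measurable_funP.
  by apply: measurable_maxr => //; exact: measurable_funP.
rewrite -PS; apply: le_measure; rewrite ?inE //.
move=> w Sw i j ij; rewrite /core_action_time.
have Hk : forall k, Num.max Delta (D k w) = Delta.
  move=> k; have := Sw k I; rewrite /= in_itv /= => /andP[_ h].
  by apply/max_idPl.
by rewrite !Hk.
Qed.
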